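(* Every typed term is strongly normalizable: if $\Gamma \vdash t : A \,;\, \Delta$ is derivable in the type system described in the context, then there is no infinite sequence $(t_i)_{i<\omega}$ with $t_0 = t$ and $t_i \triangleright t_{i+1}$ for all $i$.
   Context: Types are built from propositional variables and the constant $\perp$ using $\to$, $\wedge$, $\vee$. There are two disjoint infinite sets of variables: $\lambda$-variables $x,y,\dots$ and $\mu$-variables $a,b,\dots$. Terms $\mathcal{T}$ and $\mathcal{E}$-terms $\mathcal{E}$ are given by $\mathcal{T} ::= x \mid \lambda x.\mathcal{T} \mid (\mathcal{T}\;\mathcal{E}) \mid \langle \mathcal{T},\mathcal{T}\rangle \mid \omega_1\mathcal{T} \mid \omega_2\mathcal{T} \mid \mu a.\mathcal{T} \mid (a\;\mathcal{T})$, $\mathcal{E} ::= \mathcal{T} \mid \pi_1 \mid \pi_2 \mid [x.\mathcal{T}, y.\mathcal{T}]$ ($\lambda x$ binds $x$, $\mu a$ binds $a$, and in $[x.u,y.v]$ $x$ is bound in $u$ and $y$ in $v$; terms are taken up to renaming of bound variables). Contexts $\Gamma$ (resp. $\Delta$) are sets of declarations $x:A$ (resp. $a:A$). Typing rules for judgments $\Gamma \vdash t : A \,;\, \Delta$: (ax) $\Gamma, x:A \vdash x:A;\Delta$; ($\to_i$) from $\Gamma,x:A\vdash t:B;\Delta$ infer $\Gamma\vdash \lambda x.t : A\to B;\Delta$; ($\to_e$) from $\Gamma\vdash u:A\to B;\Delta$ and $\Gamma\vdash v:A;\Delta$ infer $\Gamma\vdash (u\;v):B;\Delta$; ($\wedge_i$)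 from $\Gamma\vdash u:A;\Delta$ and $\Gamma\vdash v:B;\Delta$ infer $\Gamma\vdash\langle u,v\rangle : A\wedge B;\Delta$; ($\wedge_e^1$, $\wedge_e^2$) from $\Gamma\vdash t:A\wedge B;\Delta$ infer $\Gamma\vdash (t\;\pi_1):A;\Delta$ and $\Gamma\vdash (t\;\pi_2):B;\Delta$; ($\vee_i^1$, $\vee_i^2$) from $\Gamma\vdash t:A;\Delta$ infer $\Gamma\vdash\omega_1 t : A\vee B;\Delta$; from $\Gamma\vdash t:B;\Delta$ infer $\Gamma\vdash \omega_2 t:A\vee B;\Delta$; ($\vee_e$) from $\Gamma\vdash t:A\vee B;\Delta$, $\Gamma,x:A\vdash u:C;\Delta$, $\Gamma,y:B\vdash v:C;\Delta$ infer $\Gamma\vdash (t\;[x.u,y.v]):C;\Delta$; ($abs_i$) from $\Gamma\vdash t:A;\Delta,a:A$ infer $\Gamma\vdash (a\;t):\perp;\Delta,a:A$; ($abs_e$) from $\Gamma\vdash t:\perp;\Delta,a:A$ infer $\Gamma\vdash \mu a.t : A;\Delta$. A term is typed if $\Gamma\vdash t:A;\Delta$ is derivable for some $\Gamma,A,\Delta$. The one-step reduction $\triangleright$ on $\mathcal{E}$-terms is the closure under all term constructors of the rules: $(\lambda x.u\;v)\triangleright u[x:=v]$; $(\langle t_1,t_2\rangle\;\pi_i)\triangleright t_i$; $(\omega_i t\;[x_1.u_1,x_2.u_2])\triangleright u_i[x_i:=t]$; $((t\;[x_1.u_1,x_2.u_2])\;\varepsilon)\triangleright (t\;[x_1.(u_1\;\varepsilon),x_2.(u_2\;\varepsilon)])$;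 $(\mu a.t\;\varepsilon)\triangleright \mu a.t[a:=^*\varepsilon]$, where $\varepsilon$ is any $\mathcal{E}$-term and $t[a:=^*\varepsilon]$ is obtained from $t$ by replacing inductively each subterm of the form $(a\;v)$ by $(a\;(v\;\varepsilon))$. *)

(* Defs.v *)
(* Lambda-mu calculus with conjunction and disjunction,
   terms up to alpha-conversion represented with de Bruijn indices:
   lambda-variables and mu-variables are two separate index spaces. *)
From Stdlib Require Import Arith.

Inductive ty : Type :=
| TVar (p : nat)
| Bot
| Arr (A B : ty)
| And (A B : ty)
| Or (A B : ty).

(* Var n      : lambda-variable (de Bruijn index n, lambda-var space)
   Lam t      : \x.t (binds lambda-index 0 in t)
   App t e    : (t e)
   Pair u v   : <u,v>
   Inj1 t, Inj2 t : omega_1 t, omega_2 t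
   Mu t       : mu a.t (binds mu-index 0 in t)
   Name a t   : (a t), a a mu-variable (de Bruijn index, mu-var space)
   ETm t      : a term seen as an E-term
   Proj1, Proj2 : pi_1, pi_2
   Case u v   : [x.u, y.v] (binds lambda-index 0 in u and in v) *)
Inductive term : Type :=
| Var (n : nat)
| Lam (t : term)
| App (t : term) (e : eterm)
| Pair (u v : term)
| Inj1 (t : term)
| Inj2 (t : term)
| Mu (t : term)
| Name (a : nat) (t : term)
with eterm : Type :=
| ETm (t : term)
| Proj1
| Proj2
| Case (u v : term).

Fixpoint liftL (k : nat) (t : term) {struct t} : term :=
  match t with
  | Var n => Var (if k <=? n then S n else n)
  | Lam t => Lam (liftL (S k) t)
  | App t e => App (liftL k t) (liftLe k e)
  | Pair u v => Pair (liftL k u) (liftL k v)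
  | Inj1 t => Inj1 (liftL k t)
  | Inj2 t => Inj2 (liftL k t)
  | Mu t => Mu (liftL k t)
  | Name a t => Name a (liftL k t)
  end
with liftLe (k : nat) (e : eterm) {struct e} : eterm :=
  match e with
  | ETm t => ETm (liftL k t)
  | Proj1 => Proj1
  | Proj2 => Proj2
  | Case u v => Case (liftL (S k) u) (liftL (S k) v)
  end.

Fixpoint liftM (k : nat) (t : term) {struct t} : term :=
  match t with
  | Var n => Var n
  | Lam t => Lam (liftM k t)
  | App t e => App (liftM k t) (liftMe k e)
  | Pair u v => Pair (liftM k u) (liftM k v)
  | Inj1 t => Inj1 (liftM k t)
  | Inj2 t => Inj2 (liftM k t)
  | Mu t => Mu (liftM (S k) t)
  | Name a t => Name (if k <=? a then S a else a) (liftM k t)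
  end
with liftMe (k : nat) (e : eterm) {struct e} : eterm :=
  match e with
  | ETm t => ETm (liftM k t)
  | Proj1 => Proj1
  | Proj2 => Proj2
  | Case u v => Case (liftM k u) (liftM k v)
  end.

(* Capture-avoiding substitution t[x_k := v] of the lambda-variable with
   index k by v (the binder of k is removed: indices above k decrease). *)
Fixpoint substL (k : nat) (v : term) (t : term) {struct t} : term :=
  match t with
  | Var n => match Nat.compare n k with
             | Eq => v
             | Lt => Var n
             | Gt => Var (pred n)
             end
  | Lam t => Lam (substL (S k) (liftL 0 v) t)
  | App t e => App (substL k v t) (substLe k v e)
  | Pair u w => Pair (substL k v u) (substL k v w)
  | Inj1 t => Inj1 (substL k v t)
  | Inj2 t => Inj2 (substL k v t)
  | Mu t => Mu (substL k (liftM 0 v) t)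
  | Name a t => Name a (substL k v t)
  end
with substLe (k : nat) (v : term) (e : eterm) {struct e} : eterm :=
  match e with
  | ETm t => ETm (substL k v t)
  | Proj1 => Proj1
  | Proj2 => Proj2
  | Case u w => Case (substL (S k) (liftL 0 v) u) (substL (S k) (liftL 0 v) w)
  end.

(* mu-substitution t[a_k :=* eps]: replace inductively every subterm (a_k v)
   by (a_k (v eps)). The binder of a_k is kept. *)
Fixpoint substM (k : nat) (eps : eterm) (t : term) {struct t} : term :=
  match t with
  | Var n => Var n
  | Lam t => Lam (substM k (liftLe 0 eps) t)
  | App t e => App (substM k eps t) (substMe k eps e)
  | Pair u w => Pair (substM k eps u) (substM k eps w)
  | Inj1 t => Inj1 (substM k eps t)
  | Inj2 t => Inj2 (substM k eps t)
  | Mu t => Mu (substM (S k) (liftMe 0 eps) t)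
  | Name a t => if a =? k then Name a (App (substM k eps t) eps)
                else Name a (substM k eps t)
  end
with substMe (k : nat) (eps : eterm) (e : eterm) {struct e} : eterm :=
  match e with
  | ETm t => ETm (substM k eps t)
  | Proj1 => Proj1
  | Proj2 => Proj2
  | Case u w => Case (substM k (liftLe 0 eps) u) (substM k (liftLe 0 eps) w)
  end.

Inductive red : term -> term -> Prop :=
| r_beta u v : red (App (Lam u) (ETm v)) (substL 0 v u)
| r_proj1 t1 t2 : red (App (Pair t1 t2) Proj1) t1
| r_proj2 t1 t2 : red (App (Pair t1 t2) Proj2) t2
| r_case1 t u1 u2 : red (App (Inj1 t) (Case u1 u2)) (substL 0 t u1)
| r_case2 t u1 u2 : red (App (Inj2 t) (Case u1 u2)) (substL 0 t u2)
| r_comm t u1 u2 eps :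
    red (App (App t (Case u1 u2)) eps)
        (App t (Case (App u1 (liftLe 0 eps)) (App u2 (liftLe 0 eps))))
| r_mu t eps : red (App (Mu t) eps) (Mu (substM 0 (liftMe 0 eps) t))
| c_lam t t' : red t t' -> red (Lam t) (Lam t')
| c_appl t t' e : red t t' -> red (App t e) (App t' e)
| c_appr t e e' : rede e e' -> red (App t e) (App t e')
| c_pairl u u' v : red u u' -> red (Pair u v) (Pair u' v)
| c_pairr u v v' : red v v' -> red (Pair u v) (Pair u v')
| c_inj1 t t' : red t t' -> red (Inj1 t) (Inj1 t')
| c_inj2 t t' : red t t' -> red (Inj2 t) (Inj2 t')
| c_mu t t' : red t t' -> red (Mu t) (Mu t')
| c_name a t t' : red t t' -> red (Name a t) (Name a t')
with rede : eterm -> eterm -> Prop :=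
| ce_tm t t' : red t t' -> rede (ETm t) (ETm t')
| ce_casel u u' v : red u u' -> rede (Case u v) (Case u' v)
| ce_caser u v v' : red v v' -> rede (Case u v) (Case u v').

Definition ctx := nat -> ty.
Definition scons (A : ty) (G : ctx) : ctx :=
  fun n => match n with 0 => A | S m => G m end.

Inductive typing : ctx -> ctx -> term -> ty -> Prop :=
| ty_ax G D x : typing G D (Var x) (G x)
| ty_arri G D t A B :
    typing (scons A G) D t B -> typing G D (Lam t) (Arr A B)
| ty_arre G D u v A B :
    typing G D u (Arr A B) -> typing G D v A -> typing G D (App u (ETm v)) B
| ty_andi G D u v A B :
    typing G D u A -> typing G D v B -> typing G D (Pair u v) (And A B)
| ty_ande1 G D t A B : typing G D t (And A B) -> typing G D (App t Proj1) A
| ty_ande2 G D t A B : typing G D t (And A B) -> typing G D (App t Proj2) B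
| ty_ori1 G D t A B : typing G D t A -> typing G D (Inj1 t) (Or A B)
| ty_ori2 G D t A B : typing G D t B -> typing G D (Inj2 t) (Or A B)
| ty_ore G D t u v A B C :
    typing G D t (Or A B) -> typing (scons A G) D u C ->
    typing (scons B G) D v C -> typing G D (App t (Case u v)) C
| ty_absi G D a t : typing G D t (D a) -> typing G D (Name a t) Bot
| ty_abse G D t A : typing G (scons A D) t Bot -> typing G D (Mu t) A.

(* Main.v *)
Require Import Defs.
From Stdlib Require Import Arith List Lia FunctionalExtensionality.
Import ListNotations.

Scheme term_mind := Induction for term Sort Prop
with eterm_mind := Induction for eterm Sort Prop.
Combined Scheme te_mind from term_mind, eterm_mind.

Definition msub := nat -> (nat * list eterm).

Fixpoint sapp (t : term) (K : list eterm) : term :=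
  match K with [] => t | e :: K => sapp (App t e) K end.

Definition upL (s : nat -> term) : nat -> term :=
  fun n => match n with 0 => Var 0 | S m => liftL 0 (s m) end.
Definition upLk (k : msub) : msub := fun a => (fst (k a), map (liftLe 0) (snd (k a))).
Definition upMs (s : nat -> term) : nat -> term := fun n => liftM 0 (s n).
Definition upMk (k : msub) : msub :=
  fun a => match a with 0 => (0, []) | S b => (S (fst (k b)), map (liftMe 0) (snd (k b))) end.

Fixpoint inst (s : nat -> term) (k : msub) (t : term) {struct t} : term :=
  match t with
  | Var n => s n
  | Lam t => Lam (inst (upL s) (upLk k) t)
  | App t e => App (inst s k t) (inste s k e)
  | Pair u v => Pair (inst s k u) (inst s k v)
  | Inj1 t => Inj1 (inst s k t)
  | Inj2 t => Inj2 (inst s k t)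
  | Mu t => Mu (inst (upMs s) (upMk k) t)
  | Name a t => Name (fst (k a)) (sapp (inst s k t) (snd (k a)))
  end
with inste (s : nat -> term) (k : msub) (e : eterm) {struct e} : eterm :=
  match e with
  | ETm t => ETm (inst s k t)
  | Proj1 => Proj1
  | Proj2 => Proj2
  | Case u v => Case (inst (upL s) (upLk k) u) (inst (upL s) (upLk k) v)
  end.

Definition ren (xi : nat -> nat) : nat -> term := fun n => Var (xi n).
Definition renk (z : nat -> nat) : msub := fun a => (z a, []).
Definition bump (k n : nat) : nat := if k <=? n then S n else n.
Definition upr (xi : nat -> nat) : nat -> nat := fun n => match n with 0 => 0 | S m => S (xi m) end.

Lemma upL_ren xi : upL (ren xi) = ren (upr xi).
Proof. apply functional_extensionality; intros [|n]; reflexivity. Qed.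
Lemma upLk_renk z : upLk (renk z) = renk z.
Proof. apply functional_extensionality; intros a; reflexivity. Qed.
Lemma upMs_ren xi : upMs (ren xi) = ren xi.
Proof. apply functional_extensionality; intros a; reflexivity. Qed.
Lemma upMk_renk z : upMk (renk z) = renk (upr z).
Proof. apply functional_extensionality; intros [|a]; reflexivity. Qed.

Lemma sapp_nil t : sapp t [] = t. Proof. reflexivity. Qed.
Lemma sapp_app t K1 K2 : sapp t (K1 ++ K2) = sapp (sapp t K1) K2.
Proof. revert t; induction K1; simpl; auto. Qed.
Lemma inst_sapp s k t K : inst s k (sapp t K) = sapp (inst s k t) (map (inste s k) K).
Proof. revert t; induction K; simpl; intros; [reflexivity|rewrite IHK; reflexivity]. Qed.

Lemma bump_S k : bump (S k) = upr (bump k).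
Proof. apply functional_extensionality; intros [|n]; unfold bump, upr; simpl; auto.
  destruct (k <=? n); auto. Qed.
Lemma upr_id : upr (fun a => a) = (fun a => a).
Proof. apply functional_extensionality; intros [|n]; reflexivity. Qed.
Lemma bump_0 : bump 0 = S.
Proof. reflexivity. Qed.

Ltac fext := repeat f_equal; apply functional_extensionality; intros [|?]; reflexivity.

Lemma liftL_inst : (forall t k, liftL k t = inst (ren (bump k)) (renk (fun a => a)) t)
  /\ (forall e k, liftLe k e = inste (ren (bump k)) (renk (fun a => a)) e).
Proof.
  apply te_mind; intros; simpl; try reflexivity;
  repeat match goal with H : forall k, _ = _ |- _ => rewrite H end;
  rewrite ?upL_ren, ?upLk_renk, ?upMs_ren, ?upMk_renk; try reflexivity.
  all: rewrite ?bump_S, ?upr_id; reflexivity.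



Qed.

Lemma inst_ren : (forall t s k xi z, inst s k (inst (ren xi) (renk z) t) = inst (fun n => s (xi n)) (fun a => k (z a)) t)
  /\ (forall e s k xi z, inste s k (inste (ren xi) (renk z) e) = inste (fun n => s (xi n)) (fun a => k (z a)) e).
Proof.
  apply te_mind; intros; simpl; try reflexivity;
  rewrite ?upL_ren, ?upLk_renk, ?upMs_ren, ?upMk_renk;
  repeat match goal with H : forall s k xi z, _ = _ |- _ => rewrite H end; try reflexivity.
  all: repeat f_equal; apply functional_extensionality; intros [|?]; reflexivity.
Qed.

Lemma liftM_inst : (forall t k, liftM k t = inst (ren (fun n => n)) (renk (bump k)) t)
  /\ (forall e k, liftMe k e = inste (ren (fun n => n)) (renk (bump k)) e).
Proof.
  apply te_mind; intros; simpl; try reflexivity;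
  repeat match goal with H : forall k, _ = _ |- _ => rewrite H end;
  rewrite ?upL_ren, ?upLk_renk, ?upMs_ren, ?upMk_renk; try reflexivity.
  all: rewrite ?bump_S, ?upr_id; try reflexivity.
  all: try fext.
Qed.

Definition sbs (k : nat) (v : term) : nat -> term :=
  fun n => match Nat.compare n k with Eq => v | Lt => Var n | Gt => Var (pred n) end.

Lemma upL_sbs k v : upL (sbs k v) = sbs (S k) (liftL 0 v).
Proof. apply functional_extensionality; intros [|n]; unfold upL, sbs; simpl; auto.
  destruct (Nat.compare n k) eqn:E; simpl; auto.
  apply Nat.compare_gt_iff in E. destruct n; [lia|reflexivity]. Qed.
Lemma upMs_sbs k v : upMs (sbs k v) = sbs k (liftM 0 v).
Proof. apply functional_extensionality; intros n; unfold upMs, sbs; simpl; auto.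
  destruct (Nat.compare n k); reflexivity. Qed.

Lemma substL_inst : (forall t k v, substL k v t = inst (sbs k v) (renk (fun a => a)) t)
  /\ (forall e k v, substLe k v e = inste (sbs k v) (renk (fun a => a)) e).
Proof.
  apply te_mind; intros; simpl; try reflexivity;
  repeat match goal with H : forall k v, _ = _ |- _ => rewrite H end;
  rewrite ?upL_sbs, ?upLk_renk, ?upMs_sbs, ?upMk_renk, ?upr_id; try reflexivity.
Qed.

Definition msk (k : nat) (e : eterm) : msub := fun a => if a =? k then (a, [e]) else (a, []).
Lemma upLk_msk k e : upLk (msk k e) = msk k (liftLe 0 e).
Proof. apply functional_extensionality; intros a; unfold upLk, msk; destruct (a =? k); reflexivity. Qed.
Lemma upMk_msk k e : upMk (msk k e) = msk (S k) (liftMe 0 e).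
Proof. apply functional_extensionality; intros [|a]; unfold upMk, msk; simpl; auto.
  destruct (a =? k); reflexivity. Qed.
Lemma upL_id : upL (ren (fun n => n)) = ren (fun n => n).
Proof. rewrite upL_ren, upr_id; reflexivity. Qed.
Lemma upMs_id : upMs (ren (fun n => n)) = ren (fun n => n).
Proof. reflexivity. Qed.

Lemma substM_inst : (forall t k e, substM k e t = inst (ren (fun n => n)) (msk k e) t)
  /\ (forall d k e, substMe k e d = inste (ren (fun n => n)) (msk k e) d).
Proof.
  apply te_mind; intros; simpl; try reflexivity;
  repeat match goal with H : forall k e, _ = _ |- _ => rewrite H end;
  rewrite ?upL_id, ?upLk_msk, ?upMs_id, ?upMk_msk; try reflexivity.
  unfold msk; destruct (a =? k); reflexivity.
Qed.

Lemma inst_id : (forall t, inst (ren (fun n => n)) (renk (fun a => a)) t = t)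
  /\ (forall e, inste (ren (fun n => n)) (renk (fun a => a)) e = e).
Proof.
  apply te_mind; intros; simpl;
  rewrite ?upL_id, ?upLk_renk, ?upMs_id, ?upMk_renk, ?upr_id; try congruence.
  reflexivity.
Qed.

Definition comps (s2 s1 : nat -> term) (k1 : msub) : nat -> term := fun n => inst s1 k1 (s2 n).
Definition compk (k2 : msub) (s1 : nat -> term) (k1 : msub) : msub :=
  fun a => (fst (k1 (fst (k2 a))), map (inste s1 k1) (snd (k2 a)) ++ snd (k1 (fst (k2 a)))).

Lemma comps_upL s2 s1 k1 : (forall x, inst (upL s1) (upLk k1) (liftL 0 x) = liftL 0 (inst s1 k1 x)) ->
  comps (upL s2) (upL s1) (upLk k1) = upL (comps s2 s1 k1).
Proof. intros H; apply functional_extensionality; intros [|n]; unfold comps; simpl; auto. Qed.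
Lemma compk_upLk k2 s1 k1 : (forall e, inste (upL s1) (upLk k1) (liftLe 0 e) = liftLe 0 (inste s1 k1 e)) ->
  compk (upLk k2) (upL s1) (upLk k1) = upLk (compk k2 s1 k1).
Proof. intros H; apply functional_extensionality; intros a; unfold compk, upLk; simpl.
  f_equal. rewrite !map_app, !map_map. f_equal. apply map_ext; auto. Qed.
Lemma comps_upM s2 s1 k1 : (forall x, inst (upMs s1) (upMk k1) (liftM 0 x) = liftM 0 (inst s1 k1 x)) ->
  comps (upMs s2) (upMs s1) (upMk k1) = upMs (comps s2 s1 k1).
Proof. intros H; apply functional_extensionality; intros n; unfold comps, upMs; simpl; auto. Qed.
Lemma compk_upMk k2 s1 k1 : (forall e, inste (upMs s1) (upMk k1) (liftMe 0 e) = liftMe 0 (inste s1 k1 e)) ->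
  compk (upMk k2) (upMs s1) (upMk k1) = upMk (compk k2 s1 k1).
Proof. intros H; apply functional_extensionality; intros [|a]; unfold compk, upMk; simpl; auto.
  f_equal. rewrite !map_app, !map_map. f_equal. apply map_ext; auto. Qed.

Lemma Lup_ren xi z : (forall x, inst (upL (ren xi)) (upLk (renk z)) (liftL 0 x) = liftL 0 (inst (ren xi) (renk z) x))
  /\ (forall e, inste (upL (ren xi)) (upLk (renk z)) (liftLe 0 e) = liftLe 0 (inste (ren xi) (renk z) e)).
Proof. rewrite upL_ren, upLk_renk. split; intros;
  rewrite ?(proj1 liftL_inst), ?(proj2 liftL_inst), ?(proj1 inst_ren), ?(proj2 inst_ren); reflexivity. Qed.
Lemma Mup_ren xi z : (forall x, inst (upMs (ren xi)) (upMk (renk z)) (liftM 0 x) = liftM 0 (inst (ren xi) (renk z) x))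
  /\ (forall e, inste (upMs (ren xi)) (upMk (renk z)) (liftMe 0 e) = liftMe 0 (inste (ren xi) (renk z) e)).
Proof. rewrite upMs_ren, upMk_renk. split; intros;
  rewrite ?(proj1 liftM_inst), ?(proj2 liftM_inst), ?(proj1 inst_ren), ?(proj2 inst_ren); reflexivity. Qed.

Lemma inst_Name s1 k1 a X K :
  inst s1 k1 (Name a (sapp X K)) = Name (fst (k1 a)) (sapp (inst s1 k1 X) (map (inste s1 k1) K ++ snd (k1 a))).
Proof. simpl. rewrite inst_sapp, sapp_app. reflexivity. Qed.

Lemma ren_inst : (forall t s k xi z, inst (ren xi) (renk z) (inst s k t) = inst (comps s (ren xi) (renk z)) (compk k (ren xi) (renk z)) t)
  /\ (forall e s k xi z, inste (ren xi) (renk z) (inste s k e) = inste (comps s (ren xi) (renk z)) (compk k (ren xi) (renk z)) e).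
Proof.
  apply te_mind; intros; try reflexivity.
  - simpl. rewrite <- comps_upL, <- compk_upLk by apply Lup_ren.
    rewrite upL_ren, upLk_renk, H. reflexivity.
  - simpl; rewrite H, H0; reflexivity.
  - simpl; rewrite H, H0; reflexivity.
  - simpl; rewrite H; reflexivity.
  - simpl; rewrite H; reflexivity.
  - simpl. rewrite <- comps_upM, <- compk_upMk by apply Mup_ren.
    rewrite upMs_ren, upMk_renk, H. reflexivity.
  - change (inst s k (Name a t)) with (Name (fst (k a)) (sapp (inst s k t) (snd (k a)))).
    rewrite inst_Name, H. reflexivity.
  - simpl; rewrite H; reflexivity.
  - simpl. rewrite <- comps_upL, <- compk_upLk by apply Lup_ren.
    rewrite upL_ren, upLk_renk, H, H0. reflexivity.
Qed.

Lemma liftL_fun k : liftL k = inst (ren (bump k)) (renk (fun a => a)).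
Proof. apply functional_extensionality; intro; apply liftL_inst. Qed.
Lemma liftLe_fun k : liftLe k = inste (ren (bump k)) (renk (fun a => a)).
Proof. apply functional_extensionality; intro; apply liftL_inst. Qed.
Lemma liftM_fun k : liftM k = inst (ren (fun n => n)) (renk (bump k)).
Proof. apply functional_extensionality; intro; apply liftM_inst. Qed.
Lemma liftMe_fun k : liftMe k = inste (ren (fun n => n)) (renk (bump k)).
Proof. apply functional_extensionality; intro; apply liftM_inst. Qed.

Lemma L_up s k : (forall x, inst (upL s) (upLk k) (liftL 0 x) = liftL 0 (inst s k x))
  /\ (forall e, inste (upL s) (upLk k) (liftLe 0 e) = liftLe 0 (inste s k e)).
Proof.
  split; intros; rewrite ?(liftL_fun 0), ?(liftLe_fun 0), ?(proj1 inst_ren), ?(proj2 inst_ren),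
    ?(proj1 ren_inst), ?(proj2 ren_inst); f_equal; apply functional_extensionality; intros n;
  unfold comps, compk, upL, upLk; simpl; rewrite ?app_nil_r, ?liftL_fun, ?liftLe_fun; reflexivity.
Qed.

Lemma M_up s k : (forall x, inst (upMs s) (upMk k) (liftM 0 x) = liftM 0 (inst s k x))
  /\ (forall e, inste (upMs s) (upMk k) (liftMe 0 e) = liftMe 0 (inste s k e)).
Proof.
  split; intros; rewrite ?(liftM_fun 0), ?(liftMe_fun 0), ?(proj1 inst_ren), ?(proj2 inst_ren),
    ?(proj1 ren_inst), ?(proj2 ren_inst); f_equal; apply functional_extensionality; intros n;
  unfold comps, compk, upMs, upMk; simpl; rewrite ?app_nil_r, ?liftM_fun, ?liftMe_fun; reflexivity.
Qed.

Lemma inst_inst : (forall t s2 k2 s1 k1, inst s1 k1 (inst s2 k2 t) = inst (comps s2 s1 k1) (compk k2 s1 k1) t)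
  /\ (forall e s2 k2 s1 k1, inste s1 k1 (inste s2 k2 e) = inste (comps s2 s1 k1) (compk k2 s1 k1) e).
Proof.
  apply te_mind; intros; try reflexivity.
  - simpl. rewrite <- comps_upL, <- compk_upLk by apply L_up. rewrite H. reflexivity.
  - simpl; rewrite H, H0; reflexivity.
  - simpl; rewrite H, H0; reflexivity.
  - simpl; rewrite H; reflexivity.
  - simpl; rewrite H; reflexivity.
  - simpl. rewrite <- comps_upM, <- compk_upMk by apply M_up. rewrite H. reflexivity.
  - change (inst s2 k2 (Name a t)) with (Name (fst (k2 a)) (sapp (inst s2 k2 t) (snd (k2 a)))).
    rewrite inst_Name, H. reflexivity.
  - simpl; rewrite H; reflexivity.
  - simpl. rewrite <- comps_upL, <- compk_upLk by apply L_up. rewrite H, H0. reflexivity.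
Qed.

Definition tcons (v : term) (s : nat -> term) : nat -> term :=
  fun n => match n with 0 => v | S m => s m end.

Lemma sbs0_lift v : (forall x, inst (sbs 0 v) (renk (fun a => a)) (liftL 0 x) = x)
  /\ (forall e, inste (sbs 0 v) (renk (fun a => a)) (liftLe 0 e) = e).
Proof. split; intros; rewrite ?liftL_fun, ?liftLe_fun, ?(proj1 inst_ren), ?(proj2 inst_ren).
  - rewrite <- (proj1 inst_id x) at 2; reflexivity.
  - rewrite <- (proj2 inst_id e) at 2; reflexivity. Qed.

Lemma subst_up v s k t : substL 0 v (inst (upL s) (upLk k) t) = inst (tcons v s) k t.
Proof. rewrite (proj1 substL_inst), (proj1 inst_inst). f_equal; apply functional_extensionality.
  - intros [|n]; unfold comps; simpl; [reflexivity|]. apply sbs0_lift.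
  - intros a; unfold compk, upLk; simpl. rewrite map_map, app_nil_r.
    rewrite (map_ext _ (fun e => e)) by apply sbs0_lift. rewrite map_id. destruct (k a); reflexivity.
Qed.

Lemma inst_subst s k v u : inst s k (substL 0 v u) = substL 0 (inst s k v) (inst (upL s) (upLk k) u).
Proof. rewrite subst_up, (proj1 substL_inst), (proj1 inst_inst). f_equal; apply functional_extensionality.
  - intros [|n]; reflexivity.
  - intros a; unfold compk; simpl. destruct (k a); reflexivity.
Qed.

Lemma msk0_lift e : (forall x, inst (ren (fun n => n)) (msk 0 e) (liftM 0 x) = liftM 0 x)
  /\ (forall d, inste (ren (fun n => n)) (msk 0 e) (liftMe 0 d) = liftMe 0 d).
Proof. split; intros; rewrite ?liftM_fun, ?liftMe_fun, ?(proj1 inst_ren), ?(proj2 inst_ren); reflexivity. Qed.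

Lemma inst_substM s k eps t :
  inst (upMs s) (upMk k) (substM 0 (liftMe 0 eps) t) = substM 0 (liftMe 0 (inste s k eps)) (inst (upMs s) (upMk k) t).
Proof. rewrite !(proj1 substM_inst), !(proj1 inst_inst). f_equal; apply functional_extensionality.
  - intros n; unfold comps, upMs; simpl. symmetry; apply msk0_lift.
  - intros [|a]; unfold compk; simpl.
    + f_equal. f_equal. apply M_up.
    + unfold upMk. simpl. f_equal. rewrite app_nil_r, map_map. apply map_ext; intros; symmetry; apply msk0_lift.
Qed.

Lemma sapp_red X X' K : red X X' -> red (sapp X K) (sapp X' K).
Proof. revert X X'; induction K; simpl; intros; auto. apply IHK; constructor; auto. Qed.

Scheme red_mind := Induction for red Sort Prop with rede_mind := Induction for rede Sort Prop.
Combined Scheme red_cmind from red_mind, rede_mind.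

Lemma red_inst : (forall t t', red t t' -> forall s k, red (inst s k t) (inst s k t'))
  /\ (forall e e', rede e e' -> forall s k, rede (inste s k e) (inste s k e')).
Proof.
  apply red_cmind; intros; simpl; try (constructor; auto; fail).
  - rewrite inst_subst. constructor.
  - rewrite inst_subst. constructor.
  - rewrite inst_subst. constructor.
  - rewrite !(proj2 (L_up s k)). constructor.
  - rewrite inst_substM. constructor.
  - constructor. apply sapp_red; auto.
Qed.

Inductive rt {A : Type} (R : A -> A -> Prop) : A -> A -> Prop :=
| rt_refl a : rt R a a
| rt_step a b c : R a b -> rt R b c -> rt R a c.
Arguments rt_refl {A R} a.

Lemma rt_one {A} (R : A -> A -> Prop) a b : R a b -> rt R a b.
Proof. intros; econstructor; eauto; constructor. Qed.
Lemma rt_trans {A} (R : A -> A -> Prop) a b c : rt R a b -> rt R b c -> rt R a c.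
Proof. induction 1; intros; auto. econstructor; eauto. Qed.
Lemma rt_map {A B} (R : A -> A -> Prop) (S : B -> B -> Prop) (f : A -> B) :
  (forall a b, R a b -> S (f a) (f b)) -> forall a b, rt R a b -> rt S (f a) (f b).
Proof. induction 2; [constructor|econstructor; eauto]. Qed.

Inductive tc {A : Type} (R : A -> A -> Prop) : A -> A -> Prop :=
| tc_one a b : R a b -> tc R a b
| tc_step a b c : R a b -> tc R b c -> tc R a c.

Lemma rt_cases {A} (R : A -> A -> Prop) a b : rt R a b -> a = b \/ tc R a b.
Proof. induction 1; auto. right. destruct IHrt; subst; [apply tc_one|eapply tc_step]; eauto. Qed.

Definition SN := Acc (fun x y => red y x).
Definition SNp := Acc (fun x y => tc red y x).

Lemma SN_red t t' : SN t -> red t t' -> SN t'.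
Proof. intros H R; exact (Acc_inv H R). Qed.
Lemma SN_reds t t' : SN t -> rt red t t' -> SN t'.
Proof. intros H R; induction R; eauto using SN_red. Qed.

Lemma SN_SNp t : SN t -> SNp t.
Proof. induction 1 as [t _ IH]. constructor; intros y Hy.
  inversion Hy; subst. apply IH; auto. specialize (IH _ H). exact (Acc_inv IH H0). Qed.
Lemma SNp_SN t : SNp t -> SN t.
Proof. induction 1 as [t _ IH]. constructor; intros y Hy. apply IH. now apply tc_one. Qed.

Lemma SN_map (f : term -> term) : (forall a b, red a b -> red (f a) (f b)) -> forall t, SN (f t) -> SN t.
Proof. intros Hf t H; remember (f t) as u; revert t Hequ; induction H as [u _ IH]; intros; subst.
  constructor; intros y Hy. eapply IH; [apply Hf, Hy | reflexivity]. Qed.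

Lemma SN_sapp_head X K : SN (sapp X K) -> SN X.
Proof. apply (SN_map (fun X => sapp X K)); intros; apply sapp_red; auto. Qed.
Lemma SN_inst s k t : SN (inst s k t) -> SN t.
Proof. apply (SN_map (inst s k)); intros; apply red_inst; auto. Qed.
Lemma SN_Var n : SN (Var n).
Proof. constructor; intros y Hy; inversion Hy. Qed.
Lemma SN_Name b X : SN X -> SN (Name b X).
Proof. induction 1 as [X _ IH]; constructor; intros y Hy; inversion Hy; subst; apply IH; auto. Qed.
Lemma SN_Inj1 X : SN X -> SN (Inj1 X).
Proof. induction 1 as [X _ IH]; constructor; intros y Hy; inversion Hy; subst; apply IH; auto. Qed.
Lemma SN_Inj2 X : SN X -> SN (Inj2 X).
Proof. induction 1 as [X _ IH]; constructor; intros y Hy; inversion Hy; subst; apply IH; auto. Qed.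

Inductive rroot : term -> term -> Prop :=
| rr_beta u v : rroot (App (Lam u) (ETm v)) (substL 0 v u)
| rr_proj1 t1 t2 : rroot (App (Pair t1 t2) Proj1) t1
| rr_proj2 t1 t2 : rroot (App (Pair t1 t2) Proj2) t2
| rr_case1 t u1 u2 : rroot (App (Inj1 t) (Case u1 u2)) (substL 0 t u1)
| rr_case2 t u1 u2 : rroot (App (Inj2 t) (Case u1 u2)) (substL 0 t u2)
| rr_comm t u1 u2 eps :
    rroot (App (App t (Case u1 u2)) eps)
        (App t (Case (App u1 (liftLe 0 eps)) (App u2 (liftLe 0 eps))))
| rr_mu t eps : rroot (App (Mu t) eps) (Mu (substM 0 (liftMe 0 eps) t)).

Lemma red_app_inv X e T : red (App X e) T ->
  (exists X', red X X' /\ T = App X' e) \/ (exists e', rede e e' /\ T = App X e') \/ rroot (App X e) T.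
Proof. intros H; inversion H; subst; eauto 10 using rroot. Qed.

Inductive sred : list eterm -> list eterm -> Prop :=
| s_head e e' K : rede e e' -> sred (e :: K) (e' :: K)
| s_tail e K K' : sred K K' -> sred (e :: K) (e :: K')
| s_comm u1 u2 e K : sred (Case u1 u2 :: e :: K) (Case (App u1 (liftLe 0 e)) (App u2 (liftLe 0 e)) :: K).

Lemma sred_red K K' : sred K K' -> forall X, red (sapp X K) (sapp X K').
Proof. induction 1; intros; simpl.
  - apply sapp_red; constructor; auto.
  - apply IHsred.
  - apply sapp_red; constructor. Qed.

Lemma sred_len K K' : sred K K' -> length K' <= length K.
Proof. induction 1; simpl; lia. Qed.

Lemma sred_inst s k K K' : sred K K' -> sred (map (inste s k) K) (map (inste s k) K').
Proof. induction 1; simpl.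
  - constructor. apply red_inst; auto.
  - constructor; auto.
  - rewrite !(proj2 (L_up s k)). constructor. Qed.

Lemma sapp_reds X K K' : rt sred K K' -> rt red (sapp X K) (sapp X K').
Proof. induction 1; [constructor|]. econstructor; [apply sred_red; eauto|auto]. Qed.

Lemma inv_sapp X K T : red (sapp X K) T ->
  (exists X', red X X' /\ T = sapp X' K) \/ (exists K', sred K K' /\ T = sapp X K') \/
  (exists e K1 Y, K = e :: K1 /\ rroot (App X e) Y /\ T = sapp Y K1).
Proof.
  revert X T; induction K as [|e K IH]; simpl; intros X T H.
  - left; eauto.
  - destruct (IH _ _ H) as [[X' [H1 ->]]|[[K' [H1 ->]]|[e2 [K2 [Y [-> [H1 ->]]]]]]].
    + apply red_app_inv in H1. destruct H1 as [[X'' [H2 ->]]|[[e' [H2 ->]]|H2]].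
      * left; eauto.
      * right; left; exists (e' :: K); split; [constructor; auto|reflexivity].
      * right; right; exists e, K, X'; auto.
    + right; left; exists (e :: K'); split; [constructor; auto|reflexivity].
    + inversion H1; subst.
      right; left; eexists; split; [apply s_comm|reflexivity].
Qed.

Lemma reds_inst s k x y : rt red x y -> rt red (inst s k x) (inst s k y).
Proof. apply rt_map; intros; apply red_inst; auto. Qed.
Lemma sreds_inst s k K K' : rt sred K K' -> rt sred (map (inste s k) K) (map (inste s k) K').
Proof. apply rt_map; intros; apply sred_inst; auto. Qed.

Lemma inst_mono : (forall t s s' k k', (forall n, rt red (s n) (s' n)) ->
    (forall a, fst (k a) = fst (k' a) /\ rt sred (snd (k a)) (snd (k' a))) -> rt red (inst s k t) (inst s' k' t))
  /\ (forall e s s' k k', (forall n, rt red (s n) (s' n)) ->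
    (forall a, fst (k a) = fst (k' a) /\ rt sred (snd (k a)) (snd (k' a))) -> rt rede (inste s k e) (inste s' k' e)).
Proof.
  assert (HL : forall s s', (forall n, rt red (s n) (s' n)) -> forall n, rt red (upL s n) (upL s' n)).
  { intros s s' H [|n]; simpl; [constructor|]. rewrite liftL_fun. apply reds_inst; auto. }
  assert (HLk : forall k k' : msub, (forall a, fst (k a) = fst (k' a) /\ rt sred (snd (k a)) (snd (k' a))) ->
     forall a, fst (upLk k a) = fst (upLk k' a) /\ rt sred (snd (upLk k a)) (snd (upLk k' a))).
  { intros k k' H a; unfold upLk; simpl; destruct (H a); split; auto. rewrite liftLe_fun; apply sreds_inst; auto. }
  assert (HM : forall s s', (forall n, rt red (s n) (s' n)) -> forall n, rt red (upMs s n) (upMs s' n)).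
  { intros s s' H n; unfold upMs. rewrite liftM_fun. apply reds_inst; auto. }
  assert (HMk : forall k k' : msub, (forall a, fst (k a) = fst (k' a) /\ rt sred (snd (k a)) (snd (k' a))) ->
     forall a, fst (upMk k a) = fst (upMk k' a) /\ rt sred (snd (upMk k a)) (snd (upMk k' a))).
  { intros k k' H [|a]; unfold upMk; simpl; [split; constructor|]. destruct (H a); split; [congruence|].
    rewrite liftMe_fun; apply sreds_inst; auto. }
  apply te_mind; intros; simpl; auto.
  - apply (rt_map red red Lam); [intros; constructor; auto|]. apply H; auto.
  - eapply rt_trans; [apply (rt_map red red (fun x => App x (inste s k e))); [intros; constructor; auto|apply H; auto]|].
    apply (rt_map rede red (fun e => App (inst s' k' t) e)); [intros; constructor; auto|apply H0; auto].
  - eapply rt_trans; [apply (rt_map red red (fun x => Pair x (inst s k v))); [intros; constructor; auto|apply H; auto]|].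
    apply (rt_map red red (fun e => Pair (inst s' k' u) e)); [intros; constructor; auto|apply H0; auto].
  - apply (rt_map red red Inj1); [intros; constructor; auto|]. apply H; auto.
  - apply (rt_map red red Inj2); [intros; constructor; auto|]. apply H; auto.
  - apply (rt_map red red Mu); [intros; constructor; auto|]. apply H; auto.
  - destruct (H1 a) as [E S]. rewrite E.
    apply (rt_map red red (Name (fst (k' a)))); [intros; constructor; auto|].
    apply rt_trans with (b := sapp (inst s k t) (snd (k' a))); [apply sapp_reds; auto|].
    apply (rt_map red red (fun X => sapp X (snd (k' a)))); [intros; apply sapp_red; auto|apply H; auto].
  - apply (rt_map red rede ETm); [intros; constructor; auto|]. apply H; auto.
  - constructor.
  - constructor.
  - eapply rt_trans; [apply (rt_map red rede (fun x => Case x (inst (upL s) (upLk k) v))); [intros; constructor; auto|apply H; auto]|].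
    apply (rt_map red rede (fun e => Case (inst (upL s') (upLk k') u) e)); [intros; constructor; auto|apply H0; auto].
Qed.

Lemma SN_sapp_var M K n : SN (sapp M K) -> SN (sapp (Var n) K).
Proof.
  intro H; remember (sapp M K) as T; revert K HeqT; induction H as [T _ IH]; intros K ->.
  constructor; intros Y HY. apply inv_sapp in HY.
  destruct HY as [[X' [H1 ->]]|[[K' [H1 ->]]|[e [K1 [Y' [-> [H1 ->]]]]]]].
  - inversion H1.
  - eapply IH; [apply sred_red; eauto|reflexivity].
  - inversion H1.
Qed.

Lemma red_substL k v t t' : red t t' -> red (substL k v t) (substL k v t').
Proof. intros H; rewrite !(proj1 substL_inst); apply red_inst; auto. Qed.
Lemma reds_substL0 t v v' : red v v' -> rt red (substL 0 v t) (substL 0 v' t).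
Proof. intros H; rewrite !(proj1 substL_inst). apply inst_mono.
  - intros [|n]; simpl; [apply rt_one; auto|constructor].
  - intros; split; constructor. Qed.

Lemma E_beta K t v : SN (sapp (substL 0 v t) K) -> SN v -> SN (sapp (App (Lam t) (ETm v)) K).
Proof.
  intros H1 H2. apply SN_SNp in H1.
  enough (G : forall T1, SNp T1 -> forall v, SN v -> forall K t, T1 = sapp (substL 0 v t) K ->
            SN (sapp (App (Lam t) (ETm v)) K)) by (eapply G; eauto).
  clear. intros T1 H1; induction H1 as [T1 HT1 IH1]; intros v H2; induction H2 as [v Hv IH2]; intros K t E.
  constructor; intros T HT. apply inv_sapp in HT.
  destruct HT as [[X' [H1 ->]]|[[K' [H1 ->]]|[e [K1 [Y' [-> [H1 ->]]]]]]].
  - apply red_app_inv in H1. destruct H1 as [[X'' [H1 ->]]|[[e' [H1 ->]]|H1]].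
    + inversion H1; subst. eapply IH1; [|constructor; auto|reflexivity].
      apply tc_one, sapp_red, red_substL; auto.
    + inversion H1; subst. rename t' into v'.
      destruct (rt_cases _ _ _ (reds_substL0 t v v' H0)) as [E|E].
      * apply IH2; auto. congruence.
      * eapply IH1; [|apply Hv; auto|reflexivity].
        clear -E. induction E; [apply tc_one, sapp_red; auto|eapply tc_step; eauto using sapp_red].
    + inversion H1; subst. apply SNp_SN. constructor; auto.
  - eapply IH1; [|constructor; auto|reflexivity]. subst; apply tc_one, sred_red; auto.
  - inversion H1.
Qed.

Lemma SNp_of X : (forall y, tc red X y -> SNp y) -> SNp X.
Proof. intros; constructor; auto. Qed.

Lemma E_proj1 K u v : SN (sapp u K) -> SN v -> SN (sapp (App (Pair u v) Proj1) K).
Proof.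
  intros H1 H2. apply SN_SNp in H1.
  enough (G : forall T1, SNp T1 -> forall v, SN v -> forall K u, T1 = sapp u K ->
            SN (sapp (App (Pair u v) Proj1) K)) by (eapply G; eauto).
  clear. intros T1 H1; induction H1 as [T1 HT1 IH1]; intros v H2; induction H2 as [v Hv IH2]; intros K u E.
  constructor; intros T HT. apply inv_sapp in HT.
  destruct HT as [[X' [H1 ->]]|[[K' [H1 ->]]|[e [K1 [Y' [-> [H1 ->]]]]]]].
  - apply red_app_inv in H1. destruct H1 as [[X'' [H1 ->]]|[[e' [H1 ->]]|H1]].
    + inversion H1; subst.
      * eapply IH1; [|constructor; auto|reflexivity]. apply tc_one, sapp_red; auto.
      * apply IH2; auto.
    + inversion H1.
    + inversion H1; subst. apply SNp_SN. constructor; auto.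
  - eapply IH1; [|constructor; auto|reflexivity]. subst; apply tc_one, sred_red; auto.
  - inversion H1.
Qed.

Lemma E_proj2 K u v : SN (sapp v K) -> SN u -> SN (sapp (App (Pair u v) Proj2) K).
Proof.
  intros H1 H2. apply SN_SNp in H1.
  enough (G : forall T1, SNp T1 -> forall u, SN u -> forall K v, T1 = sapp v K ->
            SN (sapp (App (Pair u v) Proj2) K)) by (eapply G; eauto).
  clear. intros T1 H1; induction H1 as [T1 HT1 IH1]; intros u H2; induction H2 as [u Hu IH2]; intros K v E.
  constructor; intros T HT. apply inv_sapp in HT.
  destruct HT as [[X' [H1 ->]]|[[K' [H1 ->]]|[e [K1 [Y' [-> [H1 ->]]]]]]].
  - apply red_app_inv in H1. destruct H1 as [[X'' [H1 ->]]|[[e' [H1 ->]]|H1]].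
    + inversion H1; subst.
      * apply IH2; auto.
      * eapply IH1; [|constructor; auto|reflexivity]. apply tc_one, sapp_red; auto.
    + inversion H1.
    + inversion H1; subst. apply SNp_SN. constructor; auto.
  - eapply IH1; [|constructor; auto|reflexivity]. subst; apply tc_one, sred_red; auto.
  - inversion H1.
Qed.

Lemma SN_var_ETm n v K : SN v -> SN (sapp (Var n) K) -> SN (sapp (Var n) (ETm v :: K)).
Proof.
  intros H1 H2. simpl.
  enough (G : forall v, SN v -> forall T2, SN T2 -> forall K, T2 = sapp (Var n) K ->
            SN (sapp (App (Var n) (ETm v)) K)) by (eapply G; eauto).
  clear. intros v H1; induction H1 as [v Hv IH1]; intros T2 H2; induction H2 as [T2 HT2 IH2]; intros K E.
  constructor; intros T HT. apply inv_sapp in HT.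
  destruct HT as [[X' [H1 ->]]|[[K' [H1 ->]]|[e [K1 [Y' [-> [H1 ->]]]]]]].
  - apply red_app_inv in H1. destruct H1 as [[X'' [H1 ->]]|[[e' [H1 ->]]|H1]].
    + inversion H1.
    + inversion H1; subst. eapply IH1; eauto. constructor; auto.
    + inversion H1.
  - eapply IH2; [|reflexivity]. subst; apply sred_red; auto.
  - inversion H1.
Qed.

Lemma SN_var_proj n p K : (forall e', ~ rede p e') -> (forall u1 u2, p <> Case u1 u2) ->
  SN (sapp (Var n) K) -> SN (sapp (Var n) (p :: K)).
Proof.
  intros Hp1 Hp2 H2. simpl.
  remember (sapp (Var n) K) as T2. revert K HeqT2. induction H2 as [T2 HT2 IH2]; intros K E.
  constructor; intros T HT. apply inv_sapp in HT.
  destruct HT as [[X' [H1 ->]]|[[K' [H1 ->]]|[e [K1 [Y' [-> [H1 ->]]]]]]].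
  - apply red_app_inv in H1. destruct H1 as [[X'' [H1 ->]]|[[e' [H1 ->]]|H1]].
    + inversion H1.
    + exfalso; eapply Hp1; eauto.
    + inversion H1.
  - eapply IH2; [|reflexivity]. subst; apply sred_red; auto.
  - inversion H1; subst. exfalso; eapply Hp2; eauto.
Qed.

Lemma substLe0_liftLe w e : substLe 0 w (liftLe 0 e) = e.
Proof. rewrite (proj2 substL_inst). apply sbs0_lift. Qed.
Lemma sred_liftLe K K' : sred K K' -> sred (map (liftLe 0) K) (map (liftLe 0) K').
Proof. rewrite liftLe_fun; apply sred_inst. Qed.

Lemma E_case1 K w u1 u2 : SN (sapp (substL 0 w u1) K) -> SN (sapp u2 (map (liftLe 0) K)) -> SN w ->
  SN (sapp (App (Inj1 w) (Case u1 u2)) K).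
Proof.
  intros H1 H2 H3. apply SN_SNp in H1, H2.
  enough (G : forall n, forall T1, SNp T1 -> forall T2, SNp T2 -> forall w, SN w -> forall K u1 u2,
     length K = n -> T1 = sapp (substL 0 w u1) K -> T2 = sapp u2 (map (liftLe 0) K) ->
     SN (sapp (App (Inj1 w) (Case u1 u2)) K)) by (apply (G (length K) _ H1 _ H2 w H3); reflexivity).
  clear. intro n. induction n as [n IHn] using (well_founded_induction lt_wf).
  intros T1 H1; induction H1 as [T1 HT1 IH1]; intros T2 H2; induction H2 as [T2 HT2 IH2];
  intros w H3; induction H3 as [w Hw IH3]; intros K u1 u2 Hn E1 E2.
  assert (S1 : SNp T1) by (constructor; auto). assert (S2 : SNp T2) by (constructor; auto).
  assert (S3 : SN w) by (constructor; auto).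
  constructor; intros T HT. apply inv_sapp in HT.
  destruct HT as [[X' [H1 ->]]|[[K' [H1 ->]]|[e [K1 [Y' [-> [H1 ->]]]]]]].
  - apply red_app_inv in H1. destruct H1 as [[X'' [H1 ->]]|[[e' [H1 ->]]|H1]].
    + inversion H1; subst. rename t' into w'.
      destruct (rt_cases _ _ _ (reds_substL0 u1 w w' H0)) as [E|E].
      * apply IH3; auto. congruence.
      * eapply IH1; [|apply S2|apply Hw; auto|reflexivity|reflexivity|reflexivity].
        clear -E. induction E; [apply tc_one, sapp_red; auto|eapply tc_step; eauto using sapp_red].
    + inversion H1; subst.
      * eapply IH1; [|apply S2|apply S3|reflexivity|reflexivity|reflexivity].
        apply tc_one, sapp_red, red_substL; auto.
      * eapply IH2; [|apply S3|reflexivity|reflexivity|reflexivity].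
        apply tc_one, sapp_red; auto.
    + inversion H1; subst. apply SNp_SN. constructor; auto.
  - pose proof (sred_len _ _ H1) as HL. subst.
    assert (A1 : SNp (sapp (substL 0 w u1) K')) by (apply HT1, tc_one, sred_red; auto).
    assert (A2 : SNp (sapp u2 (map (liftLe 0) K'))) by (apply HT2, tc_one, sred_red, sred_liftLe; auto).
    destruct (Nat.lt_ge_cases (length K') (length K)).
    + eapply IHn; [eauto|apply A1|apply A2|apply S3|reflexivity|reflexivity|reflexivity].
    + eapply IH1; [apply tc_one, sred_red; eauto|apply A2|apply S3|lia|reflexivity|reflexivity].
  - inversion H1; subst.
    eapply (IHn (length K1)); [simpl; lia|apply S1|apply S2|apply S3|reflexivity| |reflexivity].
    simpl. rewrite substLe0_liftLe. reflexivity.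
Qed.

Lemma E_case2 K w u1 u2 : SN (sapp (substL 0 w u2) K) -> SN (sapp u1 (map (liftLe 0) K)) -> SN w ->
  SN (sapp (App (Inj2 w) (Case u1 u2)) K).
Proof.
  intros H1 H2 H3. apply SN_SNp in H1, H2.
  enough (G : forall n, forall T1, SNp T1 -> forall T2, SNp T2 -> forall w, SN w -> forall K u1 u2,
     length K = n -> T1 = sapp (substL 0 w u2) K -> T2 = sapp u1 (map (liftLe 0) K) ->
     SN (sapp (App (Inj2 w) (Case u1 u2)) K)) by (apply (G (length K) _ H1 _ H2 w H3); reflexivity).
  clear. intro n. induction n as [n IHn] using (well_founded_induction lt_wf).
  intros T1 H1; induction H1 as [T1 HT1 IH1]; intros T2 H2; induction H2 as [T2 HT2 IH2];
  intros w H3; induction H3 as [w Hw IH3]; intros K u1 u2 Hn E1 E2.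
  assert (S1 : SNp T1) by (constructor; auto). assert (S2 : SNp T2) by (constructor; auto).
  assert (S3 : SN w) by (constructor; auto).
  constructor; intros T HT. apply inv_sapp in HT.
  destruct HT as [[X' [H1 ->]]|[[K' [H1 ->]]|[e [K1 [Y' [-> [H1 ->]]]]]]].
  - apply red_app_inv in H1. destruct H1 as [[X'' [H1 ->]]|[[e' [H1 ->]]|H1]].
    + inversion H1; subst. rename t' into w'.
      destruct (rt_cases _ _ _ (reds_substL0 u2 w w' H0)) as [E|E].
      * apply IH3; auto. congruence.
      * eapply IH1; [|apply S2|apply Hw; auto|reflexivity|reflexivity|reflexivity].
        clear -E. induction E; [apply tc_one, sapp_red; auto|eapply tc_step; eauto using sapp_red].
    + inversion H1; subst.
      * eapply IH2; [|apply S3|reflexivity|reflexivity|reflexivity].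
        apply tc_one, sapp_red; auto.
      * eapply IH1; [|apply S2|apply S3|reflexivity|reflexivity|reflexivity].
        apply tc_one, sapp_red, red_substL; auto.
    + inversion H1; subst. apply SNp_SN. constructor; auto.
  - pose proof (sred_len _ _ H1) as HL. subst.
    assert (A1 : SNp (sapp (substL 0 w u2) K')) by (apply HT1, tc_one, sred_red; auto).
    assert (A2 : SNp (sapp u1 (map (liftLe 0) K'))) by (apply HT2, tc_one, sred_red, sred_liftLe; auto).
    destruct (Nat.lt_ge_cases (length K') (length K)).
    + eapply IHn; [eauto|apply A1|apply A2|apply S3|reflexivity|reflexivity|reflexivity].
    + eapply IH1; [apply tc_one, sred_red; eauto|apply A2|apply S3|lia|reflexivity|reflexivity].
  - inversion H1; subst.
    eapply (IHn (length K1)); [simpl; lia|apply S1|apply S2|apply S3|reflexivity| |reflexivity].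
    simpl. rewrite substLe0_liftLe. reflexivity.
Qed.

Definition mcons (L : list eterm) : msub := fun a => match a with 0 => (0, L) | S b => (S b, []) end.

Lemma mcons_substM L e t :
  inst (ren (fun n => n)) (mcons L) (substM 0 (liftMe 0 e) t) = inst (ren (fun n => n)) (mcons (liftMe 0 e :: L)) t.
Proof.
  rewrite (proj1 substM_inst), (proj1 inst_inst). f_equal; apply functional_extensionality.
  all: intros [|a]; unfold compk; simpl; try reflexivity.
  rewrite liftMe_fun, (proj2 inst_ren). reflexivity.
Qed.

Lemma reds_mcons t K K' : sred K K' ->
  rt red (inst (ren (fun n => n)) (mcons (map (liftMe 0) K)) t) (inst (ren (fun n => n)) (mcons (map (liftMe 0) K')) t).
Proof. intros H. apply inst_mono; [intros; constructor|].
  intros [|a]; simpl; split; try reflexivity; try constructor.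
  apply rt_one. rewrite liftMe_fun. apply sred_inst; auto. Qed.

Lemma E_mu K t : SN (inst (ren (fun n => n)) (mcons (map (liftMe 0) K)) t) -> SN (sapp (Var 0) K) ->
  SN (sapp (Mu t) K).
Proof.
  intros H1 H2. apply SN_SNp in H1.
  enough (G : forall n, forall T1, SNp T1 -> forall T2, SN T2 -> forall K t,
     length K = n -> T1 = inst (ren (fun n => n)) (mcons (map (liftMe 0) K)) t -> T2 = sapp (Var 0) K ->
     SN (sapp (Mu t) K)) by (apply (G (length K) _ H1 _ H2); reflexivity).
  clear. intro n. induction n as [n IHn] using (well_founded_induction lt_wf).
  intros T1 H1; induction H1 as [T1 HT1 IH1]; intros T2 H2; induction H2 as [T2 HT2 IH2];
  intros K t Hn E1 E2.
  assert (S1 : SNp T1) by (constructor; auto). assert (S2 : SN T2) by (constructor; auto).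
  constructor; intros T HT. apply inv_sapp in HT.
  destruct HT as [[X' [H1 ->]]|[[K' [H1 ->]]|[e [K1 [Y' [-> [H1 ->]]]]]]].
  - inversion H1; subst. eapply IH1; [|apply S2|reflexivity|reflexivity|reflexivity].
    apply tc_one, red_inst; auto.
  - pose proof (sred_len _ _ H1) as HL. subst.
    pose proof (reds_mcons t _ _ H1) as R.
    assert (A1 : SNp (inst (ren (fun n => n)) (mcons (map (liftMe 0) K')) t))
      by (apply SN_SNp; eapply SN_reds; [apply SNp_SN, S1|exact R]).
    assert (A2 : SN (sapp (Var 0) K')) by (eapply SN_red; [apply S2|apply sred_red; auto]).
    destruct (Nat.lt_ge_cases (length K') (length K)).
    + eapply IHn; [eauto|apply A1|apply A2|reflexivity|reflexivity|reflexivity].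
    + destruct (rt_cases _ _ _ R) as [E|E].
      * eapply IH2; [apply sred_red; eauto|lia|exact E|reflexivity].
      * eapply IH1; [exact E|apply A2|lia|reflexivity|reflexivity].
  - inversion H1; subst.
    eapply (IHn (length K1)); [simpl; lia|apply S1| |reflexivity| |reflexivity].
    + eapply SN_sapp_var with (M := App (Var 0) e). apply S2.
    + rewrite mcons_substM. reflexivity.
Qed.

Fixpoint RS (A : ty) : list eterm -> Prop :=
  match A with
  | TVar _ => fun K => K = []
  | Bot => fun K => K = []
  | Arr A B => fun K => exists v K', K = ETm v :: K' /\ (forall K0, RS A K0 -> SN (sapp v K0)) /\ RS B K'
  | And A B => fun K => exists K', (K = Proj1 :: K' /\ RS A K') \/ (K = Proj2 :: K' /\ RS B K')
  | Or A B => fun K => (forall w, (forall K0, RS A K0 -> SN (sapp w K0)) -> SN (sapp (Inj1 w) K)) /\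
                      (forall w, (forall K0, RS B K0 -> SN (sapp w K0)) -> SN (sapp (Inj2 w) K))
  end.
Definition RT A t := forall K, RS A K -> SN (sapp t K).

Lemma CR A : (forall n, RT A (Var n)) /\ (forall t, RT A t -> SN t) /\ (exists K, RS A K).
Proof.
  induction A as [p| |A [VA [SA [KA HKA]]] B [VB [SB [KB HKB]]]|A [VA [SA [KA HKA]]] B [VB [SB [KB HKB]]]|A [VA [SA [KA HKA]]] B [VB [SB [KB HKB]]]].
  - split; [intros n K ->; apply SN_Var|split; [intros t H; apply (H []); reflexivity|exists []; reflexivity]].
  - split; [intros n K ->; apply SN_Var|split; [intros t H; apply (H []); reflexivity|exists []; reflexivity]].
  - split; [|split].
    + intros n K [v [K' [-> [Hv HK']]]]. apply SN_var_ETm; [apply SA; exact Hv|apply VB; auto].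
    + intros t H. apply (SN_sapp_head t (ETm (Var 0) :: KB)). apply H. exists (Var 0), KB; split; [reflexivity|split; [apply VA|exact HKB]].
    + exists (ETm (Var 0) :: KB), (Var 0), KB; split; [reflexivity|split; [apply VA|exact HKB]].
  - split; [|split].
    + intros n K [K' [[-> H]|[-> H]]]; apply SN_var_proj;
      [intros e' He; inversion He|intros u1 u2; discriminate|apply VA; auto|
       intros e' He; inversion He|intros u1 u2; discriminate|apply VB; auto].
    + intros t H. apply (SN_sapp_head t (Proj1 :: KA)). apply H. exists KA; left; auto.
    + exists (Proj1 :: KA), KA; left; auto.
  - assert (N : RS (Or A B) []) by (split; intros w Hw; simpl; [apply SN_Inj1; apply SA; exact Hw|apply SN_Inj2; apply SB; exact Hw]).
    split; [|split].
    + intros n K [H1 H2]. apply SN_sapp_var with (M := Inj1 (Var 0)). apply H1, VA.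
    + intros t H. apply (H []); auto.
    + exists []; auto.
Qed.

Lemma RT_SN A t : RT A t -> SN t.
Proof. apply (CR A). Qed.
Lemma RT_Var A n : RT A (Var n).
Proof. apply (CR A). Qed.

Lemma substL_sapp_lift w X K : substL 0 w (sapp X (map (liftLe 0) K)) = sapp (substL 0 w X) K.
Proof. revert X; induction K; simpl; intros; auto. rewrite IHK. simpl. rewrite substLe0_liftLe. reflexivity. Qed.

Lemma SN_branch X K : SN (sapp (substL 0 (Var 0) X) K) -> SN (sapp X (map (liftLe 0) K)).
Proof. intros H. apply (SN_map (substL 0 (Var 0))); [intros; apply red_substL; auto|].
  rewrite substL_sapp_lift. exact H. Qed.

Definition kr : msub := fun a => match a with 0 => (0, []) | S b => (b, []) end.
Definition kc0 (L : list eterm) : msub := fun a => match a with 0 => (0, L) | S b => (b, []) end.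
Definition kcons (L : list eterm) (k : msub) : msub := fun a => match a with 0 => (0, L) | S b => k b end.

Lemma kr_lift : forall e, inste (ren (fun n => n)) kr (liftMe 0 e) = e.
Proof. intros e. rewrite liftMe_fun, (proj2 inst_ren). apply (proj2 inst_id). Qed.
Lemma kc0_lift L : forall e, inste (ren (fun n => n)) (kc0 L) (liftMe 0 e) = e.
Proof. intros e. rewrite liftMe_fun, (proj2 inst_ren). apply (proj2 inst_id). Qed.
Lemma kc0_liftt L : forall x, inst (ren (fun n => n)) (kc0 L) (liftM 0 x) = x.
Proof. intros e. rewrite liftM_fun, (proj1 inst_ren). apply (proj1 inst_id). Qed.

Lemma mu_eq s k K t :
  inst (ren (fun n => n)) kr (inst (ren (fun n => n)) (mcons (map (liftMe 0) K)) (inst (upMs s) (upMk k) t))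
  = inst s (kcons K k) t.
Proof.
  assert (E1 : forall x, inst (ren (fun n => n)) kr (inst (ren (fun n => n)) (mcons (map (liftMe 0) K)) x)
     = inst (ren (fun n => n)) (kc0 K) x).
  { intros x. rewrite (proj1 inst_inst). f_equal; apply functional_extensionality.
    all: intros [|a]; unfold compk; simpl; try reflexivity.
    rewrite app_nil_r, map_map. rewrite (map_ext _ (fun e => e)) by apply kr_lift. rewrite map_id; reflexivity. }
  rewrite E1, (proj1 inst_inst). f_equal; apply functional_extensionality.
  - intros n; unfold comps, upMs. apply kc0_liftt.
  - intros [|a]; unfold compk; simpl; try reflexivity.
    rewrite app_nil_r, map_map. rewrite (map_ext _ (fun e => e)) by apply kc0_lift. rewrite map_id.
    destruct (k a); reflexivity.
Qed.

Lemma fund G D t A : typing G D t A -> forall s k, (forall n, RT (G n) (s n)) ->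
  (forall a v, RT (D a) v -> SN (sapp v (snd (k a)))) -> RT A (inst s k t).
Proof.
  induction 1; intros s k Hs Hk.
  - apply Hs.
  - intros K [v [K' [-> [Hv HK']]]]. simpl. apply E_beta; [|apply (RT_SN A); exact Hv].
    rewrite subst_up. apply IHtyping; auto. intros [|n]; simpl; auto.
  - intros K HK. change (SN (sapp (inst s k u) (ETm (inst s k v) :: K))). apply IHtyping1; auto.
    exists (inst s k v), K; split; auto. split; auto. apply IHtyping2; auto.
  - intros K [K' [[-> HK]|[-> HK]]]; simpl.
    + apply E_proj1; [apply IHtyping1; auto|apply (RT_SN B), IHtyping2; auto].
    + apply E_proj2; [apply IHtyping2; auto|apply (RT_SN A), IHtyping1; auto].
  - intros K HK. change (SN (sapp (inst s k t) (Proj1 :: K))). apply IHtyping; auto. exists K; auto.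
  - intros K HK. change (SN (sapp (inst s k t) (Proj2 :: K))). apply IHtyping; auto. exists K; auto.
  - intros K [H1 H2]. apply H1. apply IHtyping; auto.
  - intros K [H1 H2]. apply H2. apply IHtyping; auto.
  - intros K HK.
    change (SN (sapp (inst s k t) (Case (inst (upL s) (upLk k) u) (inst (upL s) (upLk k) v) :: K))).
    apply IHtyping1; auto. split; intros w Hw; simpl.
    + apply E_case1; [| |apply (RT_SN A); exact Hw].
      * rewrite subst_up. apply IHtyping2; auto. intros [|n]; simpl; auto.
      * apply SN_branch. rewrite subst_up. apply IHtyping3; auto. intros [|n]; simpl; auto. apply RT_Var.
    + apply E_case2; [| |apply (RT_SN B); exact Hw].
      * rewrite subst_up. apply IHtyping3; auto. intros [|n]; simpl; auto.
      * apply SN_branch. rewrite subst_up. apply IHtyping2; auto. intros [|n]; simpl; auto. apply RT_Var.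
  - intros K HK. simpl in HK; subst. simpl. apply SN_Name. apply Hk. apply IHtyping; auto.
  - intros K HK. simpl. apply E_mu; [|exact (RT_Var A 0 K HK)].
    apply (SN_inst (ren (fun n => n)) kr). rewrite mu_eq.
    refine (IHtyping s (kcons K k) Hs _ [] eq_refl).
    intros [|a] v Hv; simpl; auto.
Qed.

Lemma SN_no_chain t : SN t -> ~ (exists f : nat -> term, f 0 = t /\ forall i, red (f i) (f (S i))).
Proof.
  induction 1 as [t _ IH]. intros [f [H0 Hf]]. subst.
  apply (IH (f 1) (Hf 0)). exists (fun i => f (S i)); split; auto.
Qed.

Theorem theorem3 (G D : ctx) (t : term) (A : ty) :
  typing G D t A ->
  ~ (exists f : nat -> term, f 0 = t /\ forall i, red (f i) (f (S i))).
Proof.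
  intros Hty. apply SN_no_chain. apply (RT_SN A).
  rewrite <- (proj1 inst_id t). apply (fund G D t A Hty).
  - intros n. apply RT_Var.
  - intros a v Hv. simpl. apply (RT_SN (D a)); auto.
Qed.
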